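(* Let $\Pi\in\boldsymbol{\Pi}_{q,r}$ and $W\in\mathbb{R}^{q\times p}$ with $W$ of full column rank, and assume $\mathcal{Z}_r^+(\Pi)\neq\emptyset$. Define $\Pi_W:=\begin{bmatrix}W^\top\Pi_{11}W&W^\top\Pi_{12}\\ \Pi_{21}W&\Pi_{22}\end{bmatrix}\in\mathbb{S}^{p+r}$. Then $\mathcal{Z}_r^+(\Pi)W=\mathcal{Z}_r^+(\Pi_W)$.
   Context: $\mathbb{S}^k$ denotes the real symmetric $k\times k$ matrices; for symmetric matrices, $A\ge 0$ ($A>0$) means positive semidefinite (definite). $A^\dagger$ is the Moore–Penrose pseudo-inverse. Any $\Pi\in\mathbb{S}^{q+r}$ is partitioned as $\Pi=\begin{bmatrix}\Pi_{11}&\Pi_{12}\\ \Pi_{21}&\Pi_{22}\end{bmatrix}$ with $\Pi_{11}\in\mathbb{S}^q$, $\Pi_{22}\in\mathbb{S}^r$. The generalized Schur complement is $\Pi\mid\Pi_{22}:=\Pi_{11}-\Pi_{12}\Pi_{22}^\dagger\Pi_{21}$. The set $\boldsymbol{\Pi}_{q,r}$ consists of all $\Pi\in\mathbb{S}^{q+r}$ with $\Pi_{22}\le 0$, $\Pi\mid\Pi_{22}\ge 0$ and $\ker\Pi_{22}\subseteq\ker\Pi_{12}$. Define $\mathcal{Z}_r^+(\Pi)=\{Z\in\mathbb{R}^{r\times q}:\begin{bmatrix}I_q\\ Z\end{bmatrix}^\top\Pi\begin{bmatrix}I_q\\ Z\end{bmatrix}> 0\}$ (analogously $\mathcal{Z}_r^+(\Pi_W)\subseteq\mathbb{R}^{r\times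 p}$ using $I_p$). For $\mathcal{S}\subseteq\mathbb{R}^{r\times q}$, $\mathcal{S}W:=\{SW:S\in\mathcal{S}\}$. *)

(* Defs.v *)
From HB Require Import structures.
From mathcomp Require Import all_boot all_order all_algebra.
From mathcomp Require Import reals.
Set Implicit Arguments. Unset Strict Implicit. Unset Printing Implicit Defensive.
Import Order.TTheory GRing.Theory Num.Theory.
Local Open Scope ring_scope.

Section Defs.
Variable R : realType.

Definition symmetric n (A : 'M[R]_n) : Prop := A^T = A.

Definition psd n (A : 'M[R]_n) : Prop :=
  symmetric A /\ forall v : 'cV[R]_n, 0 <= (v^T *m A *m v) 0 0.

Definition nsd n (A : 'M[R]_n) : Prop :=
  symmetric A /\ forall v : 'cV[R]_n, (v^T *m A *m v) 0 0 <= 0.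

Definition pd n (A : 'M[R]_n) : Prop :=
  symmetric A /\ forall v : 'cV[R]_n, v != 0 -> 0 < (v^T *m A *m v) 0 0.

(* X is the Moore-Penrose pseudo-inverse of A (the four Penrose equations;
   such an X exists and is unique). *)
Definition is_pinv m n (A : 'M[R]_(m, n)) (X : 'M[R]_(n, m)) : Prop :=
  [/\ A *m X *m A = A, X *m A *m X = X,
      (A *m X)^T = A *m X & (X *m A)^T = X *m A].

Definition P11 q r (P : 'M[R]_(q + r)) : 'M[R]_q := ulsubmx P.
Definition P12 q r (P : 'M[R]_(q + r)) : 'M[R]_(q, r) := ursubmx P.
Definition P21 q r (P : 'M[R]_(q + r)) : 'M[R]_(r, q) := dlsubmx P.
Definition P22 q r (P : 'M[R]_(q + r)) : 'M[R]_r := drsubmx P.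

Definition gschur q r (P : 'M[R]_(q + r)) (X : 'M[R]_r) : 'M[R]_q :=
  P11 P - P12 P *m X *m P21 P.

Definition PiSet q r (P : 'M[R]_(q + r)) : Prop :=
  [/\ symmetric P,
      nsd (P22 P),
      (forall X, is_pinv (P22 P) X -> psd (gschur P X))
    & (forall v : 'cV[R]_r, P22 P *m v = 0 -> P12 P *m v = 0)].

Definition Zplus q r (P : 'M[R]_(q + r)) (Z : 'M[R]_(r, q)) : Prop :=
  pd ((col_mx 1%:M Z)^T *m P *m col_mx 1%:M Z).
End Defs.

Definition PiW (R : realType) q r p (P : 'M[R]_(q + r)) (W : 'M[R]_(q, p))
  : 'M[R]_(p + r) :=
  block_mx (W^T *m P11 P *m W) (W^T *m P12 P) (P21 P *m W) (P22 P).

(* Main.v *)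
Require Import Defs.
From HB Require Import structures.
From mathcomp Require Import all_boot all_order all_algebra.
From mathcomp Require Import reals lra.
Import Order.TTheory GRing.Theory Num.Theory.
Local Open Scope ring_scope.

Set Implicit Arguments. Unset Strict Implicit.
Section H.
Variable R : realType.

Definition Q n (A : 'M[R]_n) (v : 'cV[R]_n) : R := (v^T *m A *m v) 0 0.

Lemma QM n k (A : 'M[R]_n) (B : 'M[R]_(n,k)) v : Q (B^T *m A *m B) v = Q A (B *m v).
Proof. by rewrite /Q trmx_mul !mulmxA. Qed.

Lemma QD n (A B : 'M[R]_n) v : Q (A + B) v = Q A v + Q B v.
Proof. by rewrite /Q mulmxDr mulmxDl mxE. Qed.

Lemma Q0 n (A : 'M[R]_n) : Q A 0 = 0.
Proof. by rewrite /Q trmx0 !mul0mx mxE. Qed.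

Lemma Qsplit n (S : 'M[R]_n) a b : S^T = S -> a^T *m S *m b = 0 ->
  Q S (a + b) = Q S a + Q S b.
Proof.
move=> sS h; rewrite /Q [(a+b)^T]linearD /= !mulmxDl !mulmxDr h.
have -> : b^T *m S *m a = (a^T *m S *m b)^T by rewrite !trmx_mul trmxK sS mulmxA.
by rewrite h trmx0 addr0 add0r mxE.
Qed.

Lemma blk_quad m n k (X : 'M[R]_(m,k)) (Y : 'M[R]_(n,k)) a b c d :
 (col_mx X Y)^T *m block_mx a b c d *m col_mx X Y =
   X^T *m a *m X + X^T *m b *m Y + Y^T *m c *m X + Y^T *m d *m Y.
Proof.
rewrite tr_col_mx mul_row_block mul_row_col !mulmxDl.
by rewrite addrACA !addrA.
Qed.

Lemma symq n k (P : 'M[R]_n) (C : 'M[R]_(n,k)) : P^T = P -> (C^T *m P *m C)^T = C^T *m P *m C.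
Proof. by move=> sP; rewrite !trmx_mul trmxK sP mulmxA. Qed.

Lemma pd_unit n (T : 'M[R]_n) : (forall u, u != 0 -> 0 < Q T u) -> T \in unitmx.
Proof.
move=> h; rewrite unitmxE unitfE; apply/det0P => -[v v0 vT].
have := h v^T; rewrite trmx_eq0 => /(_ v0).
by rewrite /Q trmxK vT mul0mx mxE ltxx.
Qed.
End H.
Unset Implicit Arguments. Set Strict Implicit.

Theorem mainTheorem4 (R : realType) (q r p : nat)
  (P : 'M[R]_(q + r)) (W : 'M[R]_(q, p)) :
  PiSet P ->
  \rank W = p ->
  (exists Z : 'M[R]_(r, q), Zplus P Z) ->
  forall Z' : 'M[R]_(r, p),
    Zplus (PiW P W) Z' <-> exists2 Z : 'M[R]_(r, q), Zplus P Z & Z' = Z *m W.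
Proof.
case=> sP [sN nN] _ hker rW [Z0 hZ0] Z'.
have s11 : (P11 P)^T = P11 P by rewrite /P11 trmx_ulsub sP.
have s12 : (P12 P)^T = P21 P by rewrite /P12 trmx_ursub sP.
have sub : (P12 P <= P22 P)%MS.
  rewrite submxE. apply/eqP; apply/matrixP => i j.
  have e0 : P22 P *m col j (cokermx (P22 P)) = 0.
    rewrite colE mulmxA mulmx_coker mul0mx. apply/matrixP => a b. reflexivity.
  have h := hker _ e0.
  rewrite colE in h.
  have e : col j (P12 P *m cokermx (P22 P)) i 0 = (P12 P *m cokermx (P22 P)) i j by rewrite [LHS]mxE.
  rewrite -e colE -mulmxA h. rewrite !mxE. reflexivity.
pose KT := - (P12 P *m pinvmx (P22 P)).
have hKT : P12 P = - (KT *m P22 P) by rewrite /KT mulNmx mulmxKpV // opprK.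
clearbody KT.
have hK : P21 P = - (P22 P *m KT^T).
  by rewrite -s12 hKT linearN /= trmx_mul sN.
pose S := P11 P - KT *m P22 P *m KT^T.
have sS : S^T = S.
  by rewrite /S linearB /= !trmx_mul trmxK sN s11 mulmxA.
have G : forall k (X : 'M_(q,k)) (Y : 'M_(r,k)),
   (col_mx X Y)^T *m P *m col_mx X Y =
   X^T *m S *m X + (Y - KT^T *m X)^T *m P22 P *m (Y - KT^T *m X).
  move=> k X Y.
  rewrite {1}(_ : P = block_mx (P11 P) (P12 P) (P21 P) (P22 P)); last by rewrite submxK.
  rewrite blk_quad hKT hK /S [(Y - _)^T]linearB /= trmx_mul trmxK.
  rewrite !mulmxBl !mulmxBr !mulmxN !mulNmx !mulmxA ?opprK.
  rewrite mulmxBl ?mulmxA.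
  set a := X^T *m _ *m X. set b := X^T *m KT *m _ *m Y. set c := Y^T *m _ *m _ *m X.
  set d := Y^T *m _ *m Y. set e := X^T *m KT *m _ *m _ *m X.
  by rewrite opprB [d - c + _]addrC !addrA addrNK addrAC.
clearbody S.
set N := P22 P.
set K := KT^T.
have F1 : forall Z : 'M_(r,q), (col_mx 1%:M Z)^T *m P *m col_mx 1%:M Z = S + (Z - K)^T *m N *m (Z - K).
  by move=> Z; rewrite G trmx1 mul1mx mulmx1 mulmx1.
have FW : forall Z2 : 'M_(r,p), (col_mx 1%:M Z2)^T *m PiW P W *m col_mx 1%:M Z2 = (col_mx W Z2)^T *m P *m col_mx W Z2.
  move=> Z2; rewrite /PiW; etransitivity; first by apply: blk_quad.
  have -> : (col_mx W Z2)^T *m P *m col_mx W Z2 = (col_mx W Z2)^T *m block_mx (P11 P) (P12 P) (P21 P) (P22 P) *m col_mx W Z2 by rewrite submxK.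
  rewrite blk_quad trmx1 !mul1mx !mulmx1 !mulmxA; reflexivity.
have QN : forall k (Y : 'M_(r,k)) v, Q (Y^T *m N *m Y) v <= 0.
  by move=> k Y v; rewrite QM; apply: nN.
have Spos : forall v, v != 0 -> 0 < Q S v.
  move=> v v0; have := hZ0.2 v v0; rewrite -/(Q _ v) F1 QD.
  have := QN _ (Z0 - K) v; lra.
have Sge : forall v, 0 <= Q S v.
  move=> v; have [->|v0] := eqVneq v 0; first by rewrite Q0.
  exact/ltW/Spos.
have Wi : forall u : 'cV_p, W *m u = 0 -> u = 0.
  move=> u Wu.
  have rf : row_free W^T by rewrite /row_free mxrank_tr rW.
  apply: trmx_inj; rewrite trmx0; apply: (row_free_inj rf).
  by rewrite /= -trmx_mul Wu trmx0 mul0mx.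
split.
- case=> _ hpos.
  pose D := Z' - K *m W.
  pose T := W^T *m S *m W.
  have hG : forall u, u != 0 -> 0 < Q T u + Q (D^T *m N *m D) u.
    move=> u u0; have := hpos u u0; rewrite -/(Q _ u) FW G -QD.
    done.
  have Tu : T \in unitmx.
    apply: pd_unit => u u0; have := hG u u0; have := QN _ D u; lra.
  pose A := invmx T *m W^T *m S.
  have AW : A *m W = 1%:M by rewrite /A -!mulmxA (mulmxA W^T) mulVmx.
  exists (K + D *m A).
    split; first by apply: symq.
    move=> v v0; change (0 < Q ((col_mx 1%:M (K + D *m A))^T *m P *m col_mx 1%:M (K + D *m A)) v).
    rewrite F1 (_ : K + D *m A - K = D *m A); last by rewrite addrC addKr.
    rewrite (_ : (D *m A)^T *m N *m (D *m A) = A^T *m (D^T *m N *m D) *m A); last by rewrite trmx_mul !mulmxA.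
    rewrite QD QM.
    set u := A *m v.
    have ev : v = W *m u + (v - W *m u) by rewrite addrC subrK.
    have orth : (W *m u)^T *m S *m (v - W *m u) = 0.
      rewrite mulmxBr trmx_mul -!mulmxA.
      have -> : W^T *m (S *m v) = T *m u.
        by rewrite /u /A /T !mulmxA mulmxV // mul1mx.
      by rewrite /T !mulmxA subrr.
    rewrite {1}ev Qsplit // -QM -/T.
    have [u0|u0] := eqVneq u 0.
      have : v - W *m u != 0 by rewrite u0 mulmx0 subr0.
      move=> /Spos; rewrite u0 !Q0; lra.
    have := hG u u0; have := Sge (v - W *m u); lra.
  by rewrite mulmxDl -mulmxA AW mulmx1 /D addrC subrK.
- case=> Z hZ ->.
  split.
    apply: symq; rewrite /PiW tr_block_mx !trmx_mul !trmxK s11 sN.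
    have s21 : (P21 P)^T = P12 P by rewrite -s12 trmxK.
    by rewrite s21 s12 mulmxA.
  move=> u u0; change (0 < Q ((col_mx 1%:M (Z *m W))^T *m PiW P W *m col_mx 1%:M (Z *m W)) u).
  rewrite FW (_ : col_mx W (Z *m W) = col_mx 1%:M Z *m W); last by rewrite mul_col_mx mul1mx.
  rewrite (_ : (col_mx 1%:M Z *m W)^T *m P *m (col_mx 1%:M Z *m W) = W^T *m ((col_mx 1%:M Z)^T *m P *m col_mx 1%:M Z) *m W); last by rewrite trmx_mul !mulmxA.
  rewrite QM.
  apply: hZ.2.
  by apply/eqP => /Wi; apply/eqP.
Qed.
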